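(* Let $\mathbb{C}$ be a regular category such that for any three effective equivalence relations $\alpha,\beta,\gamma$ on any object $X$ of $\mathbb{C}$ we have $\alpha\cap(\beta\circ\gamma)=(\alpha\cap\beta)\circ(\alpha\cap\gamma)$. Then $\mathbb{C}$ is a majority category.
   Context: A category is regular if it has finite limits and coequalizers of kernel pairs and regular epimorphisms are pullback-stable; morphisms factor as regular epi followed by mono. Relations are subobjects of products; an equivalence relation on $X$ is effective if it is the kernel pair of some morphism out of $X$; $\cap$ denotes intersection (pullback) of subobjects. For $w:S\to W$ and a subobject $A$ of $W$, $w\in_S A$ means $w$ factors through a representative of $A$. The composite $R\circ S$ of relations represented by $(r_1,r_2):R_0\to X\times Y$ and $(s_1,s_2):S_0\to Y\times Z$ is the image of $(r_1p_1,s_2p_2):P\to X\times Z$, $(P,p_1,p_2)$ the pullback of $s_1$ along $r_2$. A ternary relation $R\leqslant X\times Y\times Z$ is majority-selecting if for all $S$ and $x,x':S\to X$, $y,y':S\to Y$, $z,z':S\to Z$: $(x,y,z')\in_S R$, $(x,y',z)\in_S R$, $(x',y,z)\in_S R$ imply $(x,y,z)\in_S R$. A category with products is a majority category if all its ternary relations are majority-selecting. *)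

(* Defs.v *)
Set Implicit Arguments.
Unset Strict Implicit.

Record Category := {
  Ob :> Type;
  Hom : Ob -> Ob -> Type;
  comp : forall {a b c : Ob}, Hom b c -> Hom a b -> Hom a c;
  idm : forall a : Ob, Hom a a;
  comp_assoc : forall a b c d (f : Hom a b) (g : Hom b c) (h : Hom c d),
      comp h (comp g f) = comp (comp h g) f;
  comp_id_l : forall a b (f : Hom a b), comp (idm b) f = f;
  comp_id_r : forall a b (f : Hom a b), comp f (idm a) = f
}.
Arguments Hom {C} : rename.
Arguments comp {C} {a b c} : rename.
Arguments idm {C} : rename.

Notation "g 'o' f" := (comp g f) (at level 40, left associativity).

Section Cat.
Variable C : Category.

Definition is_terminal (T : C) : Prop :=
  forall A : C, exists f : Hom A T, forall g : Hom A T, g = f.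

Definition is_product (A B P : C) (p1 : Hom P A) (p2 : Hom P B) : Prop :=
  forall (S : C) (f : Hom S A) (g : Hom S B),
    exists! h : Hom S P, p1 o h = f /\ p2 o h = g.

Definition is_equalizer (A B : C) (f g : Hom A B) (E : C) (e : Hom E A) : Prop :=
  f o e = g o e /\
  forall (S : C) (h : Hom S A), f o h = g o h -> exists! u : Hom S E, e o u = h.

Definition is_pullback (A B D : C) (f : Hom A D) (g : Hom B D)
  (P : C) (p1 : Hom P A) (p2 : Hom P B) : Prop :=
  f o p1 = g o p2 /\
  forall (S : C) (a : Hom S A) (b : Hom S B), f o a = g o b ->
    exists! h : Hom S P, p1 o h = a /\ p2 o h = b.

Definition is_kernel_pair (A D : C) (f : Hom A D) (P : C) (p1 p2 : Hom P A) : Prop :=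
  is_pullback f f p1 p2.

Definition is_coequalizer (A B : C) (f g : Hom A B) (Q : C) (q : Hom B Q) : Prop :=
  q o f = q o g /\
  forall (S : C) (h : Hom B S), h o f = h o g -> exists! u : Hom Q S, u o q = h.

Definition regular_epi (B Q : C) (e : Hom B Q) : Prop :=
  exists (A : C) (f g : Hom A B), is_coequalizer f g e.

Definition has_finite_limits : Prop :=
  (exists T : C, is_terminal T) /\
  (forall A B : C, exists (P : C) (p1 : Hom P A) (p2 : Hom P B), is_product p1 p2) /\
  (forall (A B : C) (f g : Hom A B), exists (E : C) (e : Hom E A), is_equalizer f g e).

Definition is_regular : Prop :=
  has_finite_limits /\
  (forall (A D : C) (f : Hom A D) (P : C) (p1 p2 : Hom P A),
      is_kernel_pair f p1 p2 -> exists (Q : C) (q : Hom A Q), is_coequalizer p1 p2 q) /\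
  (forall (A B D : C) (e : Hom A D) (g : Hom B D) (P : C) (p1 : Hom P A) (p2 : Hom P B),
      regular_epi e -> is_pullback e g p1 p2 -> regular_epi p2).

(* ---------- relations ----------
   A subobject of X x Y (resp. X x Y x Z) is represented by a jointly monic
   span into X, Y (resp. X, Y, Z); the relation itself is the span. *)
Record Rel2 (X Y : C) := { rel2_ob : C; rel2_1 : Hom rel2_ob X; rel2_2 : Hom rel2_ob Y }.
Record Rel3 (X Y Z : C) :=
  { rel3_ob : C; rel3_1 : Hom rel3_ob X; rel3_2 : Hom rel3_ob Y; rel3_3 : Hom rel3_ob Z }.

Definition jointly_monic2 X Y (R : Rel2 X Y) : Prop :=
  forall (S : C) (h k : Hom S (rel2_ob R)),
    rel2_1 R o h = rel2_1 R o k -> rel2_2 R o h = rel2_2 R o k -> h = k.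

Definition jointly_monic3 X Y Z (R : Rel3 X Y Z) : Prop :=
  forall (S : C) (h k : Hom S (rel3_ob R)),
    rel3_1 R o h = rel3_1 R o k -> rel3_2 R o h = rel3_2 R o k ->
    rel3_3 R o h = rel3_3 R o k -> h = k.

Definition mem2 X Y (R : Rel2 X Y) (S : C) (x : Hom S X) (y : Hom S Y) : Prop :=
  exists h : Hom S (rel2_ob R), rel2_1 R o h = x /\ rel2_2 R o h = y.

Definition mem3 X Y Z (R : Rel3 X Y Z) (S : C) (x : Hom S X) (y : Hom S Y) (z : Hom S Z)
  : Prop :=
  exists h : Hom S (rel3_ob R), rel3_1 R o h = x /\ rel3_2 R o h = y /\ rel3_3 R o h = z.

Definition same_rel2 X Y (R T : Rel2 X Y) : Prop :=
  forall (S : C) (x : Hom S X) (y : Hom S Y), mem2 R x y <-> mem2 T x y.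

Definition is_intersection X Y (R T M : Rel2 X Y) : Prop :=
  jointly_monic2 M /\
  forall (S : C) (x : Hom S X) (y : Hom S Y), mem2 M x y <-> (mem2 R x y /\ mem2 T x y).

(* M represents the composite R o T : the image of (r1 p1, t2 p2) : P -> X x Z,
   where (P, p1, p2) is the pullback of t1 along r2; "image" = regular epi
   P -> M followed by the mono M -> X x Z (jointly monic span). *)
Definition is_composite X Y Z (R : Rel2 X Y) (T : Rel2 Y Z) (M : Rel2 X Z) : Prop :=
  jointly_monic2 M /\
  exists (P : C) (p1 : Hom P (rel2_ob R)) (p2 : Hom P (rel2_ob T)) (e : Hom P (rel2_ob M)),
    is_pullback (rel2_2 R) (rel2_1 T) p1 p2 /\ regular_epi e /\
    rel2_1 M o e = rel2_1 R o p1 /\ rel2_2 M o e = rel2_2 T o p2.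

Definition is_equiv_rel X (R : Rel2 X X) : Prop :=
  jointly_monic2 R /\
  (forall (S : C) (x : Hom S X), mem2 R x x) /\
  (forall (S : C) (x y : Hom S X), mem2 R x y -> mem2 R y x) /\
  (forall (S : C) (x y z : Hom S X), mem2 R x y -> mem2 R y z -> mem2 R x z).

Definition is_effective_equiv_rel X (R : Rel2 X X) : Prop :=
  is_equiv_rel R /\
  exists (D : C) (f : Hom X D), is_kernel_pair f (rel2_1 R) (rel2_2 R).

Definition majority_selecting X Y Z (R : Rel3 X Y Z) : Prop :=
  forall (S : C) (x x' : Hom S X) (y y' : Hom S Y) (z z' : Hom S Z),
    mem3 R x y z' -> mem3 R x y' z -> mem3 R x' y z -> mem3 R x y z.

Definition has_binary_products : Prop :=
  forall A B : C, exists (P : C) (p1 : Hom P A) (p2 : Hom P B), is_product p1 p2.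

Definition is_majority_category : Prop :=
  has_binary_products /\
  forall (X Y Z : C) (R : Rel3 X Y Z), jointly_monic3 R -> majority_selecting R.

Definition effective_equiv_distributive : Prop :=
  forall (X : C) (alpha beta gamma : Rel2 X X),
    is_effective_equiv_rel alpha -> is_effective_equiv_rel beta ->
    is_effective_equiv_rel gamma ->
    forall (BG L AB AG Rt : Rel2 X X),
      is_composite beta gamma BG -> is_intersection alpha BG L ->
      is_intersection alpha beta AB -> is_intersection alpha gamma AG ->
      is_composite AB AG Rt ->
      same_rel2 L Rt.

End Cat.

(* Main.v *)
Require Import Defs.

Section Helpers.
Variable C : Category.

Lemma ex1_eq {T : Type} (P : T -> Prop) (x y : T) :
  (exists! h, P h) -> P x -> P y -> x = y.
Proof.
  intros [h [Hh U]] Hx Hy. rewrite <- (U x Hx), <- (U y Hy). reflexivity.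
Qed.

Lemma assoc_post (a b c d : C) (g : Hom b c) (f : Hom a b) (k : Hom a c) (x : Hom d a) :
  g o f = k -> g o (f o x) = k o x.
Proof. intros E. rewrite comp_assoc, E. reflexivity. Qed.

Set Implicit Arguments.
Unset Strict Implicit.

Definition epi {A B : C} (e : Hom A B) : Prop :=
  forall (Z : C) (g h : Hom B Z), g o e = h o e -> g = h.

Lemma regular_epi_epi (A B : C) (e : Hom A B) : regular_epi e -> epi e.
Proof.
  intros [W [f1 [f2 [Hc U]]]] Z g h E.
  assert (Hk : (g o e) o f1 = (g o e) o f2).
  { rewrite <- !comp_assoc, Hc. reflexivity. }
  destruct (U Z (g o e) Hk) as [u [Hu Uu]].
  apply (ex1_eq (fun u => u o e = g o e)); [exists u; split; assumption | reflexivity | symmetry; exact E].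
Qed.

Lemma epi_comp (A B D : C) (f : Hom A B) (g : Hom B D) : epi f -> epi g -> epi (g o f).
Proof.
  intros Hf Hg Z u v E. apply Hg. apply Hf. rewrite <- !comp_assoc. exact E.
Qed.

Lemma pullback_exists : has_finite_limits C ->
  forall (A B D : C) (f : Hom A D) (g : Hom B D),
  exists (P : C) (p1 : Hom P A) (p2 : Hom P B), is_pullback f g p1 p2.
Proof.
  intros [_ [Hprod Heq]] A B D f g.
  destruct (Hprod A B) as [P0 [q1 [q2 Hp]]].
  destruct (Heq P0 D (f o q1) (g o q2)) as [E [e [He Ue]]].
  exists E, (q1 o e), (q2 o e). split.
  - rewrite !comp_assoc. exact He.
  - intros S a b Hab.
    destruct (Hp S a b) as [h [[H1 H2] Uh]].
    assert (Hfh : (f o q1) o h = (g o q2) o h).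
    { rewrite <- !comp_assoc, H1, H2. exact Hab. }
    destruct (Ue S h Hfh) as [u [Hu Uu]].
    exists u. split.
    + split; rewrite <- comp_assoc, Hu; assumption.
    + intros u' [E1 E2]. apply Uu.
      apply (ex1_eq (fun h => q1 o h = a /\ q2 o h = b)).
      * exists h. split; [split; assumption | exact Uh].
      * rewrite !comp_assoc. split; assumption.
      * split; assumption.
Qed.


Lemma kernel_rel (A D : C) (f : Hom A D) : has_finite_limits C ->
  exists K : Rel2 A A, is_effective_equiv_rel K /\
    forall (S : C) (x y : Hom S A), mem2 K x y <-> f o x = f o y.
Proof.
  intros HL. destruct (pullback_exists HL f f) as [P [k1 [k2 Hpb]]].
  pose proof Hpb as [Hc U].
  assert (Hmem : forall (S : C) (x y : Hom S A),
             mem2 (Build_Rel2 k1 k2) x y <-> f o x = f o y).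
  { intros S x y. split.
    - intros [h [E1 E2]]. simpl in *. subst. rewrite !comp_assoc, Hc. reflexivity.
    - intros E. destruct (U S x y E) as [h [[E1 E2] _]]. exists h. split; assumption. }
  exists (Build_Rel2 k1 k2). split; [|exact Hmem].
  split; [split|].
  - intros S h k E1 E2. simpl in *.
    assert (Hh : f o (k1 o h) = f o (k2 o h)) by (rewrite !comp_assoc, Hc; reflexivity).
    apply (ex1_eq (fun u => k1 o u = k1 o h /\ k2 o u = k2 o h)).
    + destruct (U S _ _ Hh) as [u Hu]. exists u. exact Hu.
    + split; reflexivity.
    + split; symmetry; assumption.
  - split; [|split].
    + intros S x. apply Hmem. reflexivity.
    + intros S x y H. apply Hmem. apply Hmem in H. symmetry. exact H.
    + intros S x y z H1 H2. apply Hmem. apply Hmem in H1. apply Hmem in H2. congruence.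
  - exists D, f. exact Hpb.
Qed.

Lemma intersection_exists (X Y : C) (R T : Rel2 X Y) : has_finite_limits C ->
  jointly_monic2 R -> jointly_monic2 T -> exists M, is_intersection R T M.
Proof.
  intros HL HRm HTm. pose proof HL as [_ [Hprod _]].
  destruct (Hprod X Y) as [D [d1 [d2 Hp]]].
  destruct (Hp _ (rel2_1 R) (rel2_2 R)) as [r [[Er1 Er2] _]].
  destruct (Hp _ (rel2_1 T) (rel2_2 T)) as [t [[Et1 Et2] _]].
  destruct (pullback_exists HL r t) as [P [p1 [p2 [Hc U]]]].
  assert (F1 : rel2_1 T o p2 = rel2_1 R o p1).
  { rewrite <- Et1, <- Er1, <- !comp_assoc, Hc. reflexivity. }
  assert (F2 : rel2_2 T o p2 = rel2_2 R o p1).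
  { rewrite <- Et2, <- Er2, <- !comp_assoc, Hc. reflexivity. }
  exists (Build_Rel2 (rel2_1 R o p1) (rel2_2 R o p1)). split.
  - intros S h k E1 E2. simpl in *. rewrite <- !comp_assoc in E1, E2.
    assert (H1 : p1 o h = p1 o k) by (apply HRm; assumption).
    assert (H2 : p2 o h = p2 o k).
    { apply HTm; rewrite !comp_assoc; [rewrite F1 | rewrite F2]; rewrite <- !comp_assoc; assumption. }
    assert (Hh : r o (p1 o h) = t o (p2 o h)) by (rewrite !comp_assoc, Hc; reflexivity).
    apply (ex1_eq (fun u => p1 o u = p1 o h /\ p2 o u = p2 o h)).
    + destruct (U S _ _ Hh) as [u Hu]. exists u. exact Hu.
    + split; reflexivity.
    + split; symmetry; assumption.
  - intros S x y. split.
    + intros [w [E1 E2]]. simpl in *. split.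
      * exists (p1 o w). rewrite !comp_assoc. split; assumption.
      * exists (p2 o w). rewrite !comp_assoc, F1, F2. split; assumption.
    + intros [[hr [R1 R2]] [ht [T1 T2]]].
      assert (E : r o hr = t o ht).
      { apply (ex1_eq (fun u => d1 o u = x /\ d2 o u = y)).
        - apply Hp.
        - rewrite !comp_assoc, Er1, Er2. split; assumption.
        - rewrite !comp_assoc, Et1, Et2. split; assumption. }
      destruct (U S hr ht E) as [w [[W1 W2] _]].
      exists w. simpl. rewrite <- !comp_assoc, W1. split; assumption.
Qed.

Section Reg.
Hypothesis HR : is_regular C.

Lemma image_span (P A B : C) (f1 : Hom P A) (f2 : Hom P B) :
  exists (M : C) (e : Hom P M) (m1 : Hom M A) (m2 : Hom M B),
    regular_epi e /\ m1 o e = f1 /\ m2 o e = f2 /\ jointly_monic2 (Build_Rel2 m1 m2).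
Proof.
  destruct HR as [HL [Hcoeq Hstab]]. pose proof HL as [_ [Hprod _]].
  destruct (Hprod A B) as [D [d1 [d2 Hp]]].
  destruct (Hp _ f1 f2) as [f [[Ef1 Ef2] _]].
  destruct (pullback_exists HL f f) as [K [k1 [k2 Hk]]].
  destruct (Hcoeq _ _ f _ k1 k2 Hk) as [M [q Hq]].
  pose proof Hq as [Hqc Uq].
  assert (Hf : f o k1 = f o k2) by apply Hk.
  destruct (Uq D f Hf) as [m [Hm _]].
  assert (Rq : regular_epi q) by (exists K, k1, k2; exact Hq).
  exists M, q, (d1 o m), (d2 o m). split; [exact Rq|]. split; [|split].
  - rewrite <- comp_assoc, Hm. exact Ef1.
  - rewrite <- comp_assoc, Hm. exact Ef2.
  - intros S g h E1 E2. simpl in *.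
    assert (Emgh : m o g = m o h).
    { apply (ex1_eq (fun u => d1 o u = d1 o m o g /\ d2 o u = d2 o m o g)).
      - apply Hp.
      - rewrite !comp_assoc. split; reflexivity.
      - rewrite !comp_assoc. split; symmetry; assumption. }
    destruct (pullback_exists HL q g) as [S1 [a [s1 Hpb1]]].
    assert (Rs1 : regular_epi s1) by (exact (Hstab _ _ _ q g _ a s1 Rq Hpb1)).
    destruct (pullback_exists HL q (h o s1)) as [S2 [b [s2 Hpb2]]].
    assert (Rs2 : regular_epi s2) by (exact (Hstab _ _ _ q _ _ b s2 Rq Hpb2)).
    destruct Hpb1 as [C1 _]. destruct Hpb2 as [C2 _].
    assert (Efab : f o (a o s2) = f o b).
    { rewrite <- Hm, <- !comp_assoc. rewrite (comp_assoc s2 a q), C1.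
      rewrite C2, !comp_assoc, Emgh. reflexivity. }
    destruct Hk as [_ Uk]. destruct (Uk _ _ _ Efab) as [t [[T1 T2] _]].
    assert (Eq : g o (s1 o s2) = h o (s1 o s2)).
    { rewrite comp_assoc, <- C1, <- comp_assoc, <- T1, comp_assoc, Hqc.
      rewrite <- comp_assoc, T2, C2. rewrite comp_assoc. reflexivity. }
    apply (epi_comp (regular_epi_epi Rs2) (regular_epi_epi Rs1)) in Eq. exact Eq.
Qed.

Lemma composite_exists (X Y Z : C) (R : Rel2 X Y) (T : Rel2 Y Z) :
  exists M, is_composite R T M.
Proof.
  pose proof HR as [HL _].
  destruct (pullback_exists HL (rel2_2 R) (rel2_1 T)) as [P [p1 [p2 Hpb]]].
  destruct (image_span (rel2_1 R o p1) (rel2_2 T o p2)) as [M [e [m1 [m2 [Re [E1 [E2 Jm]]]]]]].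
  exists (Build_Rel2 m1 m2). split; [exact Jm|].
  exists P, p1, p2, e. simpl. auto.
Qed.

Lemma composite_intro (X Y Z : C) (R : Rel2 X Y) (T : Rel2 Y Z) (M : Rel2 X Z)
  (S : C) (x : Hom S X) (w : Hom S Y) (y : Hom S Z) :
  is_composite R T M -> mem2 R x w -> mem2 T w y -> mem2 M x y.
Proof.
  intros [_ [P [p1 [p2 [e [[Hc U] [_ [E1 E2]]]]]]]] [hr [R1 R2]] [ht [T1 T2]].
  assert (H : rel2_2 R o hr = rel2_1 T o ht) by congruence.
  destruct (U S hr ht H) as [t [[P1 P2] _]].
  exists (e o t). rewrite !comp_assoc, E1, E2, <- !comp_assoc, P1, P2. split; assumption.
Qed.

Lemma composite_elim (X Y Z : C) (R : Rel2 X Y) (T : Rel2 Y Z) (M : Rel2 X Z)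
  (S : C) (x : Hom S X) (y : Hom S Z) :
  is_composite R T M -> mem2 M x y ->
  exists (S' : C) (s : Hom S' S) (w : Hom S' Y),
    regular_epi s /\ mem2 R (x o s) w /\ mem2 T w (y o s).
Proof.
  intros [_ [P [p1 [p2 [e [[Hc U] [Re [E1 E2]]]]]]]] [g [G1 G2]].
  pose proof HR as [HL [_ Hstab]].
  destruct (pullback_exists HL e g) as [S' [a [s Hpb]]].
  pose proof (Hstab _ _ _ e g _ a s Re Hpb) as Rs.
  destruct Hpb as [Ca _].
  exists S', s, (rel2_2 R o (p1 o a)). split; [exact Rs|]. split.
  - exists (p1 o a). split; [|reflexivity].
    rewrite comp_assoc, <- E1, <- comp_assoc, Ca, comp_assoc, G1. reflexivity.
  - exists (p2 o a). split.
    + rewrite !comp_assoc, Hc. reflexivity.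
    + rewrite comp_assoc, <- E2, <- comp_assoc, Ca, comp_assoc, G2. reflexivity.
Qed.

Lemma lift_mem3 (X Y Z : C) (R : Rel3 X Y Z) (S S' : C) (s : Hom S' S)
  (x : Hom S X) (y : Hom S Y) (z : Hom S Z) :
  jointly_monic3 R -> regular_epi s -> mem3 R (x o s) (y o s) (z o s) -> mem3 R x y z.
Proof.
  intros Jm Rs [t [T1 [T2 T3]]].
  pose proof (regular_epi_epi Rs) as Es.
  destruct Rs as [W [c1 [c2 [Hc U]]]].
  assert (Ht : t o c1 = t o c2).
  { apply Jm; rewrite !comp_assoc; [rewrite T1|rewrite T2|rewrite T3];
      rewrite <- !comp_assoc, Hc; reflexivity. }
  destruct (U _ t Ht) as [u [Hu _]].
  exists u. rewrite <- Hu in T1, T2, T3. rewrite !comp_assoc in T1, T2, T3.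
  split; [|split]; apply Es; assumption.
Qed.

End Reg.
End Helpers.

Theorem lemma3p2 (C : Category) :
  is_regular C -> effective_equiv_distributive C -> is_majority_category C.
Proof.
  intros HR Hdist. pose proof HR as [HL _].
  split; [exact (proj1 (proj2 HL))|].
  intros X Y Z R Jm S x x' y y' z z' [u [U1 [U2 U3]]] [v [V1 [V2 V3]]] [w [W1 [W2 W3]]].
  destruct (kernel_rel (rel3_1 R) HL) as [Al [EAl MAl]].
  destruct (kernel_rel (rel3_2 R) HL) as [Be [EBe MBe]].
  destruct (kernel_rel (rel3_3 R) HL) as [Ga [EGa MGa]].
  destruct (composite_exists HR Be Ga) as [BG HBG].
  assert (JAl : jointly_monic2 Al) by apply EAl.
  assert (JBe : jointly_monic2 Be) by apply EBe.
  assert (JGa : jointly_monic2 Ga) by apply EGa.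
  destruct (intersection_exists HL JAl (proj1 HBG)) as [L HL'].
  destruct (intersection_exists HL JAl JBe) as [AB HAB].
  destruct (intersection_exists HL JAl JGa) as [AG HAG].
  destruct (composite_exists HR AB AG) as [Rt HRt].
  assert (Muv : mem2 L u v).
  { apply (proj2 HL'). split.
    - apply MAl. congruence.
    - apply (composite_intro HBG (w := w)); [apply MBe | apply MGa]; congruence. }
  apply (Hdist _ _ _ _ EAl EBe EGa _ _ _ _ _ HBG HL' HAB HAG HRt) in Muv.
  destruct (composite_elim HR HRt Muv) as [S' [s [t [Rs [Hab Hag]]]]].
  apply (proj2 HAB) in Hab. destruct Hab as [Ha Hb].
  apply (proj2 HAG) in Hag. destruct Hag as [Ha' Hg].
  apply MAl in Ha. apply MBe in Hb. apply MAl in Ha'. apply MGa in Hg.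
  apply (lift_mem3 Jm Rs). exists t.
  rewrite <- U1, <- U2, <- V3, <- !comp_assoc. rewrite Hb, Hg, <- Ha. auto.
Qed.
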